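(* Let $K>0$, let $H_1,H_2$ be real Hilbert spaces, let $B=H_1\times H_2$ with the symmetric bilinear form $\lfloor (x_1,x_2),(y_1,y_2)\rfloor=K^2\langle x_1,y_1\rangle_{H_1}-\langle x_2,y_2\rangle_{H_2}$, and let $q(b)=\frac12\lfloor b,b\rfloor$. Then: (1) a nonempty set $A\subset B$ is $q$-positive if and only if $A$ is the graph of a $K$-Lipschitz mapping $f:P_{H_1}(A)\to H_2$, where $P_{H_1}(A)=\{x_1:\exists x_2,\ (x_1,x_2)\in A\}$; (2) a set $A\subset B$ is maximally $q$-positive if and only if $A$ is the graph of a $K$-Lipschitz mapping $f:H_1\to H_2$.
   Context: A nonempty $A\subset B$ is $q$-positive if $q(b-c)\ge0$ for all $b,c\in A$; maximally $q$-positive if $q$-positive and not properly contained in another $q$-positive set. A mapping $f:D\to H_2$, $D\subset H_1$, is $K$-Lipschitz if $\|f(x)-f(y)\|_{H_2}\le K\|x-y\|_{H_1}$ for all $x,y\in D$. *)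

(* Defs.v *)
From HB Require Import structures.
From mathcomp Require Import all_boot all_order all_algebra.
From mathcomp Require Import all_classical all_reals all_analysis.
Set Implicit Arguments. Unset Strict Implicit. Unset Printing Implicit Defensive.
Import Order.TTheory GRing.Theory Num.Theory.
Import numFieldNormedType.Exports.
Local Open Scope classical_set_scope.
Local Open Scope ring_scope.

(* [ip] is an inner product on the complete normed space [V] inducing its
   norm: then V (with ip) is a real Hilbert space. *)
Definition is_inner_product {R : realType} {V : completeNormedModType R}
  (ip : V -> V -> R) : Prop :=
  [/\ forall x y, ip x y = ip y x,
      forall (a : R) x y z, ip (a *: x + y) z = a * ip x z + ip y z
    & forall x, `|x| ^+ 2 = ip x x].

Definition q_positive {R : realType} {B : zmodType} (q : B -> R) (A : set B) : Prop :=
  A !=set0 /\ forall b c, A b -> A c -> 0 <= q (b - c).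

Definition max_q_positive {R : realType} {B : zmodType} (q : B -> R) (A : set B) : Prop :=
  q_positive q A /\ forall A', q_positive q A' -> A `<=` A' -> A' = A.

Definition lfloor_form {R : realType} {H1 H2 : completeNormedModType R}
  (ip1 : H1 -> H1 -> R) (ip2 : H2 -> H2 -> R) (K : R)
  (b c : (H1 * H2)%type) : R :=
  K ^+ 2 * ip1 b.1 c.1 - ip2 b.2 c.2.

Definition qform {R : realType} {H1 H2 : completeNormedModType R}
  (ip1 : H1 -> H1 -> R) (ip2 : H2 -> H2 -> R) (K : R)
  (b : (H1 * H2)%type) : R :=
  2^-1 * lfloor_form ip1 ip2 K b b.

Definition Klipschitz_on {R : realType} {H1 H2 : normedModType R}
  (K : R) (D : set H1) (f : H1 -> H2) : Prop :=
  forall x y, D x -> D y -> `|f x - f y| <= K * `|x - y|.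

Definition projH1 {H1 H2 : Type} (A : set (H1 * H2)) : set H1 :=
  [set x1 | exists x2, A (x1, x2)].

Definition graph_on {H1 H2 : Type} (D : set H1) (f : H1 -> H2) : set (H1 * H2) :=
  [set p | D p.1 /\ p.2 = f p.1].

(* Main.v *)
Require Import Defs.
From HB Require Import structures.
From mathcomp Require Import all_boot all_order all_algebra.
From mathcomp Require Import all_classical all_reals all_analysis.
From mathcomp Require Import ring lra.
Import Order.TTheory GRing.Theory Num.Theory.
Import numFieldNormedType.Exports.
Local Open Scope classical_set_scope.
Local Open Scope ring_scope.
Lemma sq_le (R : realType) (a b : R) : 0 <= a -> 0 <= b -> a ^+ 2 <= b ^+ 2 -> a <= b.
Proof. move=> ha hb h; nra. Qed.

Lemma ip0l {R : realType} {V : completeNormedModType R} {ip : V -> V -> R} :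
  is_inner_product ip -> forall z, ip 0 z = 0.
Proof.
case=> _ hl _ z; have := hl 1 0 0 z; rewrite scale1r addr0 mul1r => h.
lra.
Qed.

Lemma ipDl {R : realType} {V : completeNormedModType R} {ip : V -> V -> R} :
  is_inner_product ip -> forall x y z, ip (x + y) z = ip x z + ip y z.
Proof. by case=> _ hl _ x y z; rewrite -{1}(scale1r x) hl mul1r. Qed.

Lemma ipZl {R : realType} {V : completeNormedModType R} {ip : V -> V -> R} :
  is_inner_product ip -> forall a x z, ip (a *: x) z = a * ip x z.
Proof. move=> h a x z; have [_ hl _] := h; by rewrite -(addr0 (a *: x)) hl ip0l // addr0. Qed.

Lemma ipNl {R : realType} {V : completeNormedModType R} {ip : V -> V -> R} :
  is_inner_product ip -> forall x z, ip (- x) z = - ip x z.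
Proof. by move=> h x z; rewrite -scaleN1r ipZl // mulN1r. Qed.

Lemma ipBl {R : realType} {V : completeNormedModType R} {ip : V -> V -> R} :
  is_inner_product ip -> forall x y z, ip (x - y) z = ip x z - ip y z.
Proof. by move=> h x y z; rewrite ipDl // ipNl. Qed.

Lemma ipC {R : realType} {V : completeNormedModType R} {ip : V -> V -> R} :
  is_inner_product ip -> forall x y, ip x y = ip y x.
Proof. by case. Qed.

Lemma ipn {R : realType} {V : completeNormedModType R} {ip : V -> V -> R} :
  is_inner_product ip -> forall x, ip x x = `|x| ^+ 2.
Proof. by case=> _ _ h x; rewrite h. Qed.

Lemma ip_ge0 {R : realType} {V : completeNormedModType R} {ip : V -> V -> R} :
  is_inner_product ip -> forall x, 0 <= ip x x.
Proof. by move=> h x; rewrite ipn // sqr_ge0. Qed.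

Lemma ip_suml {R : realType} {V : completeNormedModType R} {ip : V -> V -> R}
  (T : Type) (s : seq T) (F : T -> V) z :
  is_inner_product ip -> ip (\sum_(p <- s) F p) z = \sum_(p <- s) ip (F p) z.
Proof.
move=> h; elim: s => [|p s IH]; first by rewrite !big_nil ip0l.
by rewrite !big_cons ipDl // IH.
Qed.

Lemma ipDr {R : realType} {V : completeNormedModType R} {ip : V -> V -> R} :
  is_inner_product ip -> forall x y z, ip z (x + y) = ip z x + ip z y.
Proof. by move=> h x y z; rewrite ipC // ipDl // !(ipC h _ z). Qed.

Lemma ipZr {R : realType} {V : completeNormedModType R} {ip : V -> V -> R} :
  is_inner_product ip -> forall a x z, ip z (a *: x) = a * ip z x.
Proof. by move=> h a x z; rewrite ipC // ipZl // (ipC h x z). Qed.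

Lemma ip_comb {R : realType} {V : completeNormedModType R} {ip : V -> V -> R} :
  is_inner_product ip -> forall a b x y,
  ip (a *: x + b *: y) (a *: x + b *: y) =
  a ^+ 2 * ip x x + 2 * a * b * ip x y + b ^+ 2 * ip y y.
Proof.
move=> h a b x y.
rewrite (ipDl h) (ipZl h) (ipZl h) !(ipDr h) !(ipZr h) (ipC h y x).
ring.
Qed.

Lemma ip_sub {R : realType} {V : completeNormedModType R} {ip : V -> V -> R} :
  is_inner_product ip -> forall x y,
  ip (x - y) (x - y) = ip x x - 2 * ip x y + ip y y.
Proof.
move=> h x y; have := ip_comb h 1 (-1) x y.
rewrite scale1r scaleN1r => ->; ring.
Qed.

Lemma ip_addsq {R : realType} {V : completeNormedModType R} {ip : V -> V -> R} :
  is_inner_product ip -> forall x y,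
  ip (x + y) (x + y) = ip x x + 2 * ip y x + ip y y.
Proof.
move=> h x y; rewrite (ipDl h) !(ipDr h) (ipC h x y); ring.
Qed.

Lemma sum_sq_id {R : realType} {V : completeNormedModType R} {ip : V -> V -> R} :
  is_inner_product ip -> forall (T : Type) (s : seq T) (w : T -> R) (a : T -> V) (c : V),
  \sum_(p <- s) w p * ip (c - a p) (c - a p) =
  (\sum_(p <- s) w p) * ip c c - 2 * ip (\sum_(p <- s) w p *: a p) c
  + \sum_(p <- s) w p * ip (a p) (a p).
Proof.
move=> h T s w a c; elim: s => [|p s IH].
  by rewrite !big_nil (ip0l h); ring.
rewrite !big_cons IH (ip_sub h) (ipDl h) (ipZl h) (ipC h (a p) c); ring.
Qed.

Lemma quad_inv {R : realType} {H1 H2 : completeNormedModType R}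
  {ip1 : H1 -> H1 -> R} {ip2 : H2 -> H2 -> R} :
  is_inner_product ip1 -> is_inner_product ip2 -> forall (K : R)
  (T : eqType) (s : seq T) (w : T -> R) (a : T -> H1) (c : T -> H2),
  (forall p, p \in s -> 0 <= w p) ->
  (forall p q, p \in s -> q \in s ->
     ip2 (c p - c q) (c p - c q) <= K ^+ 2 * ip1 (a p - a q) (a p - a q)) ->
  (\sum_(p <- s) w p) * (\sum_(p <- s) w p * ip2 (c p) (c p))
   - ip2 (\sum_(p <- s) w p *: c p) (\sum_(p <- s) w p *: c p)
  <= K ^+ 2 * ((\sum_(p <- s) w p) * (\sum_(p <- s) w p * ip1 (a p) (a p))
   - ip1 (\sum_(p <- s) w p *: a p) (\sum_(p <- s) w p *: a p)).
Proof.
move=> h1 h2 K T s w a c; elim: s => [|p s IH] hw hl.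
  by rewrite !big_nil (ip0l h1) (ip0l h2) !mul0r subrr mulr0.
have hw' : forall q, q \in s -> 0 <= w q.
  by move=> q hq; apply: hw; rewrite in_cons hq orbT.
have hl' : forall q r, q \in s -> r \in s ->
     ip2 (c q - c r) (c q - c r) <= K ^+ 2 * ip1 (a q - a r) (a q - a r).
  by move=> q r hq hr; apply: hl; rewrite in_cons ?hq ?hr orbT.
have IH' := IH hw' hl'.
have hwp : 0 <= w p := hw p (mem_head p s).
have key : \sum_(q <- s) w q * ip2 (c p - c q) (c p - c q) <=
           K ^+ 2 * \sum_(q <- s) w q * ip1 (a p - a q) (a p - a q).
  rewrite mulr_sumr !big_seq; apply: ler_sum => q hq.
  rewrite mulrCA; apply: ler_wpM2l; first exact: hw'.
  by apply: hl; rewrite in_cons ?hq ?orbT ?eqxx.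
rewrite (sum_sq_id h2) (sum_sq_id h1) in key.
have key2 := ler_wpM2l hwp key.
rewrite !big_cons (ip_addsq h1) (ip_addsq h2) !(ipZl h1) !(ipZl h2) !(ipZr h1) !(ipZr h2).
move: IH' key2.
set W := \sum_(q <- s) w q.
set Qc := \sum_(q <- s) w q * ip2 (c q) (c q).
set Qa := \sum_(q <- s) w q * ip1 (a q) (a q).
set Sc := \sum_(q <- s) w q *: c q.
set Sa := \sum_(q <- s) w q *: a q.
move=> IH' key2.
nra.
Qed.

Definition Wt {R : realType} {H1 H2 : completeNormedModType R}
  (s : seq ((H1 * H2) * R)) : R := \sum_(p <- s) p.2.
Definition Sc {R : realType} {H1 H2 : completeNormedModType R}
  (s : seq ((H1 * H2) * R)) : H2 := \sum_(p <- s) p.2 *: p.1.2.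
Definition hq {R : realType} {H1 H2 : completeNormedModType R}
  (ip1 : H1 -> H1 -> R) (ip2 : H2 -> H2 -> R) (K : R) (x : H1)
  (s : seq ((H1 * H2) * R)) : R :=
  \sum_(p <- s) p.2 * ip2 p.1.2 p.1.2
  - K ^+ 2 * \sum_(p <- s) p.2 * ip1 (p.1.1 - x) (p.1.1 - x)
  - ip2 (Sc s) (Sc s).
Definition good {R : realType} {H1 H2 : completeNormedModType R}
  (A : set (H1 * H2)) (s : seq ((H1 * H2) * R)) : Prop :=
  (forall p, p \in s -> A p.1 /\ 0 <= p.2) /\ Wt s = 1.
Definition mix {R : realType} {H1 H2 : completeNormedModType R} (t : R)
  (s s' : seq ((H1 * H2) * R)) : seq ((H1 * H2) * R) :=
  [seq (p.1, (1 - t) * p.2) | p <- s] ++ [seq (p.1, t * p.2) | p <- s'].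

Lemma sum_mapS {R : realType} {H1 H2 : completeNormedModType R} (t : R)
  (s : seq ((H1 * H2) * R)) (F : (H1 * H2) -> R) :
  \sum_(p <- [seq (p.1, t * p.2) | p <- s]) p.2 * F p.1 = t * \sum_(p <- s) p.2 * F p.1.
Proof. by rewrite big_map mulr_sumr; apply: eq_bigr => p _ /=; rewrite mulrA. Qed.

Lemma sum_mapV {R : realType} {H1 H2 : completeNormedModType R} (t : R)
  (s : seq ((H1 * H2) * R)) :
  \sum_(p <- [seq (p.1, t * p.2) | p <- s]) p.2 *: p.1.2 = t *: \sum_(p <- s) p.2 *: p.1.2.
Proof. by rewrite big_map scaler_sumr; apply: eq_bigr => p _ /=; rewrite scalerA. Qed.

Lemma sum_mapW {R : realType} {H1 H2 : completeNormedModType R} (t : R)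
  (s : seq ((H1 * H2) * R)) :
  \sum_(p <- [seq (p.1, t * p.2) | p <- s]) p.2 = t * \sum_(p <- s) p.2.
Proof. by rewrite big_map mulr_sumr. Qed.

Lemma Wt_mix {R : realType} {H1 H2 : completeNormedModType R} (t : R)
  (s s' : seq ((H1 * H2) * R)) : Wt (mix t s s') = (1 - t) * Wt s + t * Wt s'.
Proof. by rewrite /Wt /mix big_cat !sum_mapW. Qed.

Lemma Sc_mix {R : realType} {H1 H2 : completeNormedModType R} (t : R)
  (s s' : seq ((H1 * H2) * R)) : Sc (mix t s s') = (1 - t) *: Sc s + t *: Sc s'.
Proof. by rewrite /Sc /mix big_cat !sum_mapV. Qed.

Lemma hq_mix {R : realType} {H1 H2 : completeNormedModType R}
  {ip1 : H1 -> H1 -> R} {ip2 : H2 -> H2 -> R} :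
  is_inner_product ip1 -> is_inner_product ip2 -> forall K x t
  (s s' : seq ((H1 * H2) * R)),
  hq ip1 ip2 K x (mix t s s') = (1 - t) * hq ip1 ip2 K x s + t * hq ip1 ip2 K x s'
     + t * (1 - t) * ip2 (Sc s - Sc s') (Sc s - Sc s').
Proof.
move=> h1 h2 K x t s s'; rewrite /hq Sc_mix (ip_comb h2) (ip_sub h2) /mix !big_cat.
rewrite (sum_mapS _ _ (fun b => ip2 b.2 b.2)) (sum_mapS _ _ (fun b => ip2 b.2 b.2)).
rewrite (sum_mapS _ _ (fun b => ip1 (b.1 - x) (b.1 - x))) (sum_mapS _ _ (fun b => ip1 (b.1 - x) (b.1 - x))).
rewrite /=; ring.
Qed.

Lemma good_mix {R : realType} {H1 H2 : completeNormedModType R}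
  {A : set (H1 * H2)} {t : R} {s s'} :
  0 <= t <= 1 -> good A s -> good A s' -> good A (mix t s s').
Proof.
move=> /andP[t0 t1] [hs ws] [hs' ws']; split; last first.
  by rewrite Wt_mix ws ws'; ring.
move=> p; rewrite mem_cat => /orP[] /mapP[q hq ->] /=.
  have [Aq wq] := hs q hq; split => //; apply: mulr_ge0 => //; lra.
have [Aq wq] := hs' q hq; split => //; exact: mulr_ge0.
Qed.

Lemma good_single {R : realType} {H1 H2 : completeNormedModType R}
  {A : set (H1 * H2)} {b} : A b -> good A [:: (b, 1 : R)].
Proof.
move=> Ab; split; last by rewrite /Wt big_seq1.
by move=> p; rewrite mem_seq1 => /eqP -> /=; split.
Qed.

Lemma hq_single {R : realType} {H1 H2 : completeNormedModType R}
  (ip1 : H1 -> H1 -> R) (ip2 : H2 -> H2 -> R) K x b :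
  hq ip1 ip2 K x [:: (b, 1 : R)] = - (K ^+ 2 * ip1 (b.1 - x) (b.1 - x)).
Proof. rewrite /hq /Sc !big_seq1 /= scale1r !mul1r; ring. Qed.

Lemma hq_le0 {R : realType} {H1 H2 : completeNormedModType R}
  {ip1 : H1 -> H1 -> R} {ip2 : H2 -> H2 -> R} :
  is_inner_product ip1 -> is_inner_product ip2 -> forall K x (A : set (H1 * H2)),
  (forall b c, A b -> A c -> ip2 (b.2 - c.2) (b.2 - c.2) <= K ^+ 2 * ip1 (b.1 - c.1) (b.1 - c.1)) ->
  forall s, good A s -> hq ip1 ip2 K x s <= 0.
Proof.
move=> h1 h2 K x A hA s [hs ws].
have hs2 : forall p, p \in s -> 0 <= p.2 := fun p hp => (hs p hp).2.
have hsl : (forall p q, p \in s -> q \in s ->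
     ip2 (p.1.2 - q.1.2) (p.1.2 - q.1.2) <=
     K ^+ 2 * ip1 (p.1.1 - x - (q.1.1 - x)) (p.1.1 - x - (q.1.1 - x))).
  move=> p q hp hq; rewrite opprB addrA subrK.
  by apply: hA; [exact: (hs p hp).1 | exact: (hs q hq).1].
have := quad_inv h1 h2 K _ s (fun p => p.2) (fun p => p.1.1 - x) (fun p => p.1.2) hs2 hsl.
rewrite /hq -/(Sc s); move: ws; rewrite /Wt => -> ; rewrite !mul1r.
have := ip_ge0 h1 (\sum_(p <- s) p.2 *: (p.1.1 - x)).
have : 0 <= K ^+ 2 := sqr_ge0 K.
nra.
Qed.

Lemma sq_lt (R : realType) (a e : R) : 0 <= a -> 0 < e -> a ^+ 2 < e ^+ 2 -> a < e.
Proof. move=> ha he h; nra. Qed.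

Lemma extension {R : realType} {H1 H2 : completeNormedModType R}
  {ip1 : H1 -> H1 -> R} {ip2 : H2 -> H2 -> R} :
  is_inner_product ip1 -> is_inner_product ip2 -> forall K (A : set (H1 * H2)) x,
  A !=set0 ->
  (forall b c, A b -> A c -> ip2 (b.2 - c.2) (b.2 - c.2) <= K ^+ 2 * ip1 (b.1 - c.1) (b.1 - c.1)) ->
  exists y, forall b, A b -> `|y - b.2| <= `|K| * `|x - b.1|.
Proof.
move=> h1 h2 K A x [b0 Ab0] hA.
pose E := [set r | exists s, good A s /\ r = hq ip1 ip2 K x s].
have hsup : has_sup E.
  split; first by exists (hq ip1 ip2 K x [:: (b0, 1)]); exists [:: (b0, 1)]; split => //; exact: good_single.
  by exists 0; rewrite /ubound /= => r [s [gs ->]]; exact: (hq_le0 h1 h2 K x A hA).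
set M := sup E.
have hM : forall s, good A s -> hq ip1 ip2 K x s <= M.
  by move=> s gs; apply: (sup_upper_bound hsup); exists s.
pose eps := @harmonic R.
have eps_gt0 : forall n, 0 < eps n by move=> n; exact: harmonic_gt0.
have : forall n, exists s, good A s /\ M - eps n < hq ip1 ip2 K x s.
  move=> n; have [r [s [gs ->]] hr] := sup_adherent (eps_gt0 n) hsup.
  by exists s.
move=> /choice [S HS].
pose Y n := Sc (S n).
have half : 0 <= (2^-1 : R) <= 1 by apply/andP; split; lra.
have cauchyY : forall n m, ip2 (Y n - Y m) (Y n - Y m) <= 2 * (eps n + eps m).
  move=> n m; have [gn hn] := HS n; have [gm hm] := HS m.
  have := hM _ (good_mix half gn gm); rewrite (hq_mix h1 h2).
  rewrite /Y; lra.
have epsle : forall n N, (N <= n)%N -> eps n <= eps N.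
  move=> n N hn; rewrite /eps /= lef_pV2 ?posrE ?ltr0n // ler_nat; by [].
have cvgY : cvg (Y @ \oo).
  apply/cauchy_cvgP; apply: cauchy_exP => e e0.
  have e20 : 0 <= 4 / e ^+ 2 by apply: divr_ge0 => //; exact: sqr_ge0.
  set N := Num.Def.archi_bound (4 / e ^+ 2).
  have hN := archi_boundP e20.
  exists (Y N); exists N => // n /= hn.
  rewrite -ball_normE /ball_ /=.
  apply: sq_lt => //.
  rewrite -(ipn h2).
  apply: (le_lt_trans (cauchyY N n)).
  have := epsle n N hn.
  have : eps N * N.+1%:R = 1 by rewrite /eps /= mulVf // pnatr_eq0.
  have : 4 < e ^+ 2 * N%:R.
    by rewrite -ltr_pdivrMl ?exprn_gt0 // mulrC.
  have := eps_gt0 N.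
  rewrite -addn1 natrD.
  nra.
set y := lim (Y @ \oo).
exists y => b Ab.
set g := K ^+ 2 * ip1 (b.1 - x) (b.1 - x).
have ineq : forall t, 0 < t < 1 -> forall n,
    t * (1 - t) * `|Y n - b.2| ^+ 2 - eps n <= t * g.
  move=> t /andP[t0 t1] n; have [gn hn] := HS n.
  have gt : 0 <= t <= 1 by apply/andP; split; lra.
  have := hM _ (good_mix gt gn (good_single Ab)).
  rewrite (hq_mix h1 h2) hq_single.
  have -> : Sc [:: (b, 1)] = b.2 by rewrite /Sc big_seq1 scale1r.
  rewrite (ipn h2) -/(Y n).
  have := hq_le0 h1 h2 K x A hA _ gn.
  rewrite -/g.
  nra.
have limineq : forall t, 0 < t < 1 -> t * (1 - t) * `|y - b.2| ^+ 2 <= t * g.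
  move=> t ht.
  have c1 : (fun n => Y n - b.2) @ \oo --> y - b.2.
    by apply: cvgB; [exact: cvgY | exact: cvg_cst].
  have c2 : (fun n => `|Y n - b.2|) @ \oo --> `|y - b.2| by exact: cvg_norm c1.
  have c3 : (fun n => t * (1 - t) * (`|Y n - b.2| * `|Y n - b.2|) - eps n) @ \oo
              --> t * (1 - t) * (`|y - b.2| * `|y - b.2|) - 0.
    apply: cvgB; last exact: cvg_harmonic.
    apply: cvgM; first exact: cvg_cst.
    exact: (cvgM c2 c2).
  have hnear : \forall n \near \oo,
      t * (1 - t) * (`|Y n - b.2| * `|Y n - b.2|) - eps n <= t * g.
    by apply: nearW => n; rewrite -expr2; exact: ineq.
  have -> : t * (1 - t) * `|y - b.2| ^+ 2 =
     lim ((fun n => t * (1 - t) * (`|Y n - b.2| * `|Y n - b.2|) - eps n) @ \oo).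
    by rewrite (cvg_lim (@Rhausdorff R) c3) subr0 expr2.
  exact: (limr_le (cvgP _ c3) hnear).
have final : `|y - b.2| ^+ 2 <= g.
  apply/ler_addgt0Pr => e e0.
  set d2 := `|y - b.2| ^+ 2.
  have d0 : 0 <= d2 := sqr_ge0 _.
  pose t := e / (d2 + e + 1).
  have den : 0 < d2 + e + 1 by lra.
  have tden : t * (d2 + e + 1) = e by rewrite /t divfK // gt_eqF.
  have t0 : 0 < t by apply: divr_gt0.
  have t1 : t < 1 by rewrite /t ltr_pdivrMr // mul1r; lra.
  have ht : 0 < t < 1 by apply/andP.
  have := limineq t ht.
  rewrite -mulrA ler_pM2l // => h.
  clearbody t; have te : 0 <= t * e by apply: mulr_ge0; lra.
  rewrite -/d2 in h; clear -h te tden d0 t0 t1; nra.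
apply: sq_le; [exact: normr_ge0 | by rewrite mulr_ge0 |].
rewrite exprMn -normrX ger0_norm ?sqr_ge0 //.
by apply: (le_trans final); rewrite /g (ipn h1) distrC.
Qed.

Lemma qform_ge0 {R : realType} {H1 H2 : completeNormedModType R}
  {ip1 : H1 -> H1 -> R} {ip2 : H2 -> H2 -> R} :
  is_inner_product ip1 -> is_inner_product ip2 -> forall K, 0 < K -> forall b c,
  0 <= qform ip1 ip2 K (b - c) <-> `|b.2 - c.2| <= K * `|b.1 - c.1|.
Proof.
move=> h1 h2 K hK b c; rewrite /qform /lfloor_form /= (ipn h1) (ipn h2).
have n1 := normr_ge0 (b.1 - c.1); have n2 := normr_ge0 (b.2 - c.2).
split => h.
  apply: sq_le => //; first by rewrite mulr_ge0 // ltW.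
  rewrite exprMn; nra.
have : `|b.2 - c.2| ^+ 2 <= (K * `|b.1 - c.1|) ^+ 2.
  by rewrite !expr2; apply: ler_pM.
rewrite exprMn => h'; nra.
Qed.

Lemma same_fst {R : realType} {H1 H2 : completeNormedModType R}
  {ip1 : H1 -> H1 -> R} {ip2 : H2 -> H2 -> R} :
  is_inner_product ip1 -> is_inner_product ip2 -> forall K, 0 < K -> forall (u : H1) (v v' : H2),
  0 <= qform ip1 ip2 K ((u, v) - (u, v')) -> v = v'.
Proof.
move=> h1 h2 K hK u v v'; rewrite (qform_ge0 h1 h2 K hK) /= subrr normr0 mulr0.
by rewrite normr_le0 subr_eq0 => /eqP.
Qed.

Theorem mainTheorem17 (R : realType) (K : R) (H1 H2 : completeNormedModType R)
  (ip1 : H1 -> H1 -> R) (ip2 : H2 -> H2 -> R)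
  (hK : 0 < K) (hip1 : is_inner_product ip1) (hip2 : is_inner_product ip2) :
  (forall A : set (H1 * H2)%type, A !=set0 ->
     (q_positive (qform ip1 ip2 K) A <->
      exists f : H1 -> H2,
        Klipschitz_on K (projH1 A) f /\ A = graph_on (projH1 A) f))
  /\
  (forall A : set (H1 * H2)%type,
     max_q_positive (qform ip1 ip2 K) A <->
     exists f : H1 -> H2,
       Klipschitz_on K setT f /\ A = graph_on setT f).
Proof.
have qge0 := qform_ge0 hip1 hip2 K hK.
have part1 : forall A : set (H1 * H2)%type, A !=set0 ->
     (q_positive (qform ip1 ip2 K) A <->
      exists f : H1 -> H2,
        Klipschitz_on K (projH1 A) f /\ A = graph_on (projH1 A) f).
  move=> A hA0; split.
    move=> [_ hq].
    pose f := fun x => match pselect (exists y, A (x, y)) with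
                       | left e => proj1_sig (cid e) | right _ => 0 end.
    have fP : forall x y, A (x, y) -> A (x, f x).
      move=> x y Axy; rewrite /f; case: pselect => [e|ne].
        exact: (proj2_sig (cid e)).
      by exfalso; apply: ne; exists y.
    exists f; split.
      move=> x x' [y Axy] [y' Ax'y'].
      by have := hq _ _ (fP _ _ Axy) (fP _ _ Ax'y'); rewrite qge0.
    apply/seteqP; split.
      move=> [x y] Axy /=; split; first by exists y.
      exact: (same_fst hip1 hip2 K hK _ _ _ (hq _ _ Axy (fP _ _ Axy))).
    by move=> [x y] [[y' Axy'] /= ->]; exact: (fP _ _ Axy').
  move=> [f [hf hAf]]; split => // b c Ab Ac; rewrite qge0.
  have : graph_on (projH1 A) f b by rewrite -hAf.
  have : graph_on (projH1 A) f c by rewrite -hAf.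
  move=> [Dc ->] [Db ->]; exact: hf.
split; first exact: part1.
move=> A; split.
  move=> [qA hmax].
  have [f [hf hAf]] := (part1 A qA.1).1 qA.
  have hT : projH1 A = setT.
    apply/seteqP; split => // x _.
    have hAip : forall b c, A b -> A c ->
        ip2 (b.2 - c.2) (b.2 - c.2) <= K ^+ 2 * ip1 (b.1 - c.1) (b.1 - c.1).
      move=> b c Ab Ac; have := qA.2 b c Ab Ac; rewrite qge0 (ipn hip1) (ipn hip2) => h.
      by rewrite -exprMn !expr2; apply: ler_pM.
    have [y hy] := extension hip1 hip2 K A x qA.1 hAip.
    have hy' : forall b, A b -> `|y - b.2| <= K * `|x - b.1|.
      by move=> b Ab; have := hy b Ab; rewrite gtr0_norm.
    pose A' := A `|` [set (x, y)].
    have qA' : q_positive (qform ip1 ip2 K) A'.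
      split; first by exists (x, y); right.
      move=> b c [Ab|->] [Ac|->]; rewrite qge0 /=.
      - by rewrite -qge0; exact: qA.2.
      - by rewrite distrC (distrC b.1); exact: hy'.
      - exact: hy'.
      - by rewrite !subrr !normr0 mulr0.
    have eA : A' = A := hmax A' qA' (fun b Ab => or_introl Ab).
    have : A' (x, y) by right.
    by rewrite eA => Axy; exists y.
  exists f; split.
    by move=> u v _ _; apply: hf; rewrite hT.
  by rewrite {1}hAf hT.
move=> [f [hf hAf]].
have qA : q_positive (qform ip1 ip2 K) A.
  split; first by exists (0, f 0); rewrite hAf.
  move=> b c; rewrite hAf => -[_ eb] [_ ec]; rewrite qge0 eb ec; exact: hf.
split => // A' qA' sub.
apply/seteqP; split; last exact: sub.
move=> [u v] A'uv.
have Au : A (u, f u) by rewrite hAf.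
have := same_fst hip1 hip2 K hK _ _ _ (qA'.2 _ _ A'uv (sub _ Au)).
by move=> ->.
Qed.
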